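(* Let $t,k,\ell$ be positive integers with $t<k$, let $\mathbb{F}$ be a finite field, and let $b$ be an integer with $b>\ell/k$. There is a black-box transformation with parameters $(t,k,k_0=\binom{k}{t},\ell,\mathbb{F})$ whose associated LMSSS $\mathcal{L}$ has every party's share in $\mathbb{F}^b$ (hence information rate $\ell/(kb)$) if and only if there is an $\mathbb{F}$-linear code $C\subseteq(\mathbb{F}^b)^k$ with rate at least $\ell/(kb)$ and distance at least $t+1$. Moreover, in the ''if'' direction the transformation can be chosen with $c_j=\ell\binom{k-1}{t}$ for every $j\in[k]$.
   Context: A $k$-party $\ell$-LMSSS over $\mathbb{F}$: an $\mathbb{F}$-linear map $\mathsf{Share}:\mathbb{F}^\ell\times\mathbb{F}^e\to\mathbb{F}^{b_1}\times\dots\times\mathbb{F}^{b_k}$ together with an access structure $\Gamma$ (sets that can linearly recover the secret from their shares) and adversary structure $\mathcal{T}$ (sets whose shares, for uniform randomness, have a distribution independent of the secret); information rate $\ell/\sum_jb_j$. Black-box transformation with parameters $(t,k,k_0,\ell,\mathbb{F})$: a $k$-party $\ell$-LMSSS $\mathcal{L}=(\mathsf{Share}_\mathcal{L},\mathsf{Rec}_\mathcal{L})$ over $\mathbb{F}$ with parameters $(e,b_1,\dots,b_k)$ (all $k$ parties together qualified), replication functions $\psi_i:[k_0]\to2^{[k]}$ ($i\in[\ell]$) and conversion functions $\varphi_j:\mathbb{F}^{c_j}\to\mathbb{F}^{b_j}$, $c_j=\sum_{i=1}^\ell|\{v\in[k_0]:j\in\psi_i(v)\}|$, such that for every $(y_i^{(v)})_{i\in[\ell],v\in[k_0]}$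 there is $\mathbf{r}$ with $(\varphi_j(\mathbf{Y}(j)))_{j}=\mathsf{Share}_\mathcal{L}((\sum_vy_1^{(v)},\dots,\sum_vy_\ell^{(v)}),\mathbf{r})$ where $\mathbf{Y}(j)=(y_i^{(v)})_{i,v:\,j\in\psi_i(v)}$, and for every $T\subseteq[k]$ with $|T|\le t$ and $i\in[\ell]$, $|\bigcup_{j\in T}\{v:j\in\psi_i(v)\}|\le k_0-1$. Its rate is the information rate of $\mathcal{L}$. $\mathbb{F}$-linear code $C\subseteq(\mathbb{F}^b)^k$: $\mathbb{F}$-subspace; rate $\dim_{\mathbb{F}}C/(bk)$; distance = minimum number of coordinates in $[k]$ where two distinct codewords differ. *)

(* Defs.v *)
From HB Require Import structures.
From mathcomp Require Import all_boot all_order all_algebra.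
Set Implicit Arguments. Unset Strict Implicit. Unset Printing Implicit Defensive.
Import Order.TTheory GRing.Theory Num.Theory.
Local Open Scope ring_scope.

(* An l-LMSSS for k parties over F with randomness length e and share sizes
   bs j : the F-linear map Share : F^l x F^e -> prod_j F^(bs j) is given by
   matrices M j, with Share(s, r)_j = (s | r) *m M j. *)
Definition share (F : fieldType) (l e k : nat) (bs : 'I_k -> nat)
  (M : forall j : 'I_k, 'M[F]_(l + e, bs j)) (s : 'rV[F]_l) (r : 'rV[F]_e)
  (j : 'I_k) : 'rV[F]_(bs j) := row_mx s r *m M j.

Definition lin_recovers (F : fieldType) (l e k : nat) (bs : 'I_k -> nat)
  (M : forall j : 'I_k, 'M[F]_(l + e, bs j)) (A : {set 'I_k}) : Prop :=
  exists R : forall j : 'I_k, 'M[F]_(bs j, l),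
    forall (s : 'rV[F]_l) (r : 'rV[F]_e),
      \sum_(j in A) (share M s r j *m R j) = s.

(* Index set of Y(j): pairs (i, v) with j \in psi_i(v); c_j is its size. *)
Definition repl_set (l k0 k : nat) (psi : 'I_l -> 'I_k0 -> {set 'I_k})
  (j : 'I_k) : {set 'I_l * 'I_k0} := [set p | j \in psi p.1 p.2].

(* Y(j) as a vector of F^(c_j) (entries listed in the enumeration order of
   the index set). *)
Definition Yof (F : fieldType) (l k0 k : nat) (psi : 'I_l -> 'I_k0 -> {set 'I_k})
  (y : 'I_l -> 'I_k0 -> F) (j : 'I_k) : 'rV[F]_#|repl_set psi j| :=
  \row_(a < #|repl_set psi j|)
     y (@enum_val _ (mem (repl_set psi j)) a).1 (@enum_val _ (mem (repl_set psi j)) a).2.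

Definition is_BBT (F : finFieldType) (t k k0 l e : nat) (bs : 'I_k -> nat)
  (M : forall j : 'I_k, 'M[F]_(l + e, bs j))
  (psi : 'I_l -> 'I_k0 -> {set 'I_k})
  (phi : forall j : 'I_k, 'rV[F]_#|repl_set psi j| -> 'rV[F]_(bs j)) : Prop :=
  [/\ lin_recovers M [set: 'I_k],
      (forall y : 'I_l -> 'I_k0 -> F, exists r : 'rV[F]_e,
         forall j : 'I_k,
           phi j (Yof psi y j) = share M (\row_i \sum_(v < k0) y i v) r j) &
      (forall T : {set 'I_k}, #|T| <= t ->
         forall i : 'I_l, #|[set v | [exists j in T, j \in psi i v]]| <= k0 - 1)%N].

Definition BBT_exists (F : finFieldType) (t k k0 l b : nat) : Prop :=
  exists (e : nat) (M : forall j : 'I_k, 'M[F]_(l + e, b))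
         (psi : 'I_l -> 'I_k0 -> {set 'I_k})
         (phi : forall j : 'I_k, 'rV[F]_#|repl_set psi j| -> 'rV[F]_b),
    is_BBT t (bs := fun _ => b) M phi.

Definition BBT_exists_c (F : finFieldType) (t k k0 l b c : nat) : Prop :=
  exists (e : nat) (M : forall j : 'I_k, 'M[F]_(l + e, b))
         (psi : 'I_l -> 'I_k0 -> {set 'I_k})
         (phi : forall j : 'I_k, 'rV[F]_#|repl_set psi j| -> 'rV[F]_b),
    is_BBT t (bs := fun _ => b) M phi /\ (forall j, #|repl_set psi j| = c)%N.

(* F-linear codes C in (F^b)^k: codewords are k x b matrices, row j being
   coordinate j. *)
Definition code_rate (F : fieldType) (k b : nat) (C : {vspace 'M[F]_(k, b)}) : rat :=
  (\dim C)%:R / (b * k)%:R.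

Definition code_dist_ge (F : fieldType) (k b : nat) (C : {vspace 'M[F]_(k, b)})
  (d : nat) : Prop :=
  forall x y : 'M[F]_(k, b), x \in C -> y \in C -> x != y ->
    (d <= #|[set j : 'I_k | row j x != row j y]|)%N.

(* Main.v *)
Require Import Defs.
From HB Require Import structures.
From mathcomp Require Import all_boot all_order all_algebra.
Set Implicit Arguments. Unset Strict Implicit. Unset Printing Implicit Defensive.
Import Order.TTheory GRing.Theory Num.Theory.
Local Open Scope ring_scope.

Lemma exists_zero_on (F : finFieldType) (t k k0 l e b : nat)
  (M : forall j : 'I_k, 'M[F]_(l + e, b)) (psi : 'I_l -> 'I_k0 -> {set 'I_k})
  (phi : forall j : 'I_k, 'rV[F]_#|repl_set psi j| -> 'rV[F]_b) :
  (0 < k0)%N -> is_BBT t (bs := fun _ => b) M phi ->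
  forall T : {set 'I_k}, (#|T| <= t)%N -> forall s : 'rV[F]_l,
  exists r : 'rV[F]_e, forall j, j \in T -> share (bs := fun _ => b) M s r j = 0.
Proof.
move=> k0pos [_ Hy Hrep] T hT s.
pose S i := [set v | [exists j in T, j \in psi i v]].
have hv i : exists v, v \notin S i.
  apply/existsP; rewrite -negb_forall; apply/negP => /forallP hall.
  have : S i = setT by apply/setP => v; rewrite in_setT hall.
  move=> hS; have := Hrep T hT i; rewrite -/(S i) hS cardsT card_ord.
  by case: (k0) k0pos => // n _; rewrite subn1 /= ltnn.
pose vsel i := odflt (Ordinal k0pos) [pick v | v \notin S i].
have hvsel i : vsel i \notin S i.
  rewrite /vsel; case: pickP => //= hn; case: (hv i) => v hv'; by rewrite hn in hv'.
pose y1 := fun (i : 'I_l) (v : 'I_k0) => if v == vsel i then s 0 i else 0.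
pose y0 := fun (i : 'I_l) (v : 'I_k0) => (0 : F).
have [r1 H1] := Hy y1.
have [r0 H0] := Hy y0.
have e1 : \row_i \sum_(v < k0) y1 i v = s.
  apply/rowP => i; rewrite mxE (bigD1 (vsel i)) //= /y1 eqxx big1 ?addr0 //.
  by move=> v /negbTE ->.
have e0 : \row_i \sum_(v < k0) y0 i v = 0.
  by apply/rowP => i; rewrite !mxE big1.
exists (r1 - r0) => j jT.
have hY : Yof psi y1 j = Yof psi y0 j.
  apply/rowP => a; rewrite !mxE /y1 /y0.
  case: eqP => // heq.
  have := enum_valP a; rewrite inE => hj.
  have := hvsel (enum_val a).1; rewrite -heq inE; case/existsP.
  by exists j; rewrite jT.
have := H1 j; rewrite hY H0 e1 e0 /share => /eqP.
rewrite eq_sym -subr_eq0 -mulmxBl opp_row_mx add_row_mx subr0.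
by move/eqP.
Qed.


Lemma mxvec_mulE (F : fieldType) (k b l : nat) (A : 'M[F]_(k, b)) (H : 'M[F]_(k * b, l)) :
  mxvec A *m H = \row_i \sum_j \sum_c A j c * H (mxvec_index j c) i.
Proof.
apply/rowP => i; rewrite !mxE (reindex _ (curry_mxvec_bij _ _)) /=.
rewrite pair_bigA; apply: eq_bigr => [[j c]] _ /=.
by rewrite mxvecE.
Qed.

Definition maskT (F : fieldType) (k b : nat) (T : {set 'I_k}) (A : 'M[F]_(k, b)) : 'M[F]_(k, b) :=
  \matrix_(j, c) if j \in T then 0 else A j c.

Lemma ext_set (k t : nat) (T : {set 'I_k}) : (#|T| <= t)%N -> (t <= k)%N ->
  exists A : {set 'I_k}, (T \subset A) /\ #|A| = t.
Proof.
move=> hT htk.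
have : (0 < #|[set B : {set 'I_k} | B \subset ~: T & #|B| == (t - #|T|)%N]|)%N.
  by rewrite cards_draws cardsCs setCK card_ord bin_gt0 leq_sub2r.
rewrite card_gt0 => /set0Pn [B]; rewrite inE => /andP [hB /eqP cB].
exists (T :|: B); split; first exact: subsetUl.
rewrite cardsU.
have -> : #|T :&: B| = 0%N.
  apply/eqP; rewrite cards_eq0; apply/eqP/setP => x; rewrite !inE.
  apply/negP => /andP [xT xB]; have := subsetP hB x xB; by rewrite inE xT.
by rewrite subn0 cB subnKC.
Qed.


Lemma partA (F : finFieldType) (t k k0 l e b : nat)
  (M : forall j : 'I_k, 'M[F]_(l + e, b)) (psi : 'I_l -> 'I_k0 -> {set 'I_k})
  (phi : forall j : 'I_k, 'rV[F]_#|repl_set psi j| -> 'rV[F]_b) :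
  (0 < k0)%N -> is_BBT t (bs := fun _ => b) M phi ->
  exists C : {vspace 'M[F]_(k, b)},
     l%:R / (k * b)%:R <= code_rate C /\ code_dist_ge C t.+1.
Proof.
move=> k0pos HB.
have Hz := exists_zero_on k0pos HB.
case: HB => [[R HR] _ _].
have key : forall T : {set 'I_k}, (#|T| <= t)%N -> forall u : 'rV[F]_l,
    (forall j, j \notin T -> R j *m u^T = 0) -> u = 0.
  move=> T hT u hu; apply/rowP => i; rewrite mxE.
  have [r hr] := Hz T hT (delta_mx 0 i).
  have := HR (delta_mx 0 i) r.
  move=> /(congr1 (fun x => x *m u^T)).
  rewrite -rowE mulmx_suml big1.
    by move/matrixP => /(_ 0 0); rewrite !mxE => <-.
  move=> j _; case: (boolP (j \in T)) => jT.
    by rewrite hr // !mul0mx.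
  by rewrite -mulmxA hu // mulmx0.
pose Cmat (u : 'rV[F]_l) : 'M[F]_(k, b) := \matrix_(j, c) (R j *m u^T) c 0.
pose X := [tuple Cmat (delta_mx 0 i) | i < l].
have CmatE u : Cmat u = \sum_(i < l) u 0 i *: X`_i.
  apply/matrixP => j c; rewrite summxE !mxE; apply: eq_bigr => i _.
  rewrite -tnth_nth tnth_map tnth_ord_tuple !mxE.
  rewrite (bigD1 i) //= !mxE eqxx big1 ?addr0; first by rewrite /= eqxx mulr1 mulrC.
  by move=> i' /negbTE hi; rewrite !mxE hi andbF mulr0.
have Cmat0 u : Cmat u = 0 -> u = 0.
  move=> h0; apply: (key set0); first by rewrite cards0.
  move=> j _; apply/matrixP => c z; rewrite ord1.
  by have /matrixP /(_ j c) := h0; rewrite !mxE.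
have Xfree : free X.
  apply/freeP => kk hk i.
  have := Cmat0 (\row_i kk i).
  rewrite CmatE; under eq_bigr do rewrite mxE.
  by move=> /(_ hk) /rowP /(_ i); rewrite !mxE.
have dimC : \dim <<X>> = l by move: Xfree => /eqP ->; rewrite size_tuple.
exists <<X>>%VS; split.
  by rewrite /code_rate dimC mulnC.
move=> x y xC yC xy; rewrite leqNgt; apply/negP => hsmall.
have xyC : x - y \in <<X>>%VS by rewrite memvB.
have hxy := coord_span xyC.
pose u := \row_i coord X i (x - y).
have hu : Cmat u = x - y.
  by rewrite CmatE hxy; apply: eq_bigr => i _; rewrite mxE.
have u0 : u = 0.
  apply: (key [set j | row j x != row j y]) => //.
  move=> j; rewrite inE negbK => /eqP hj.
  apply/matrixP => c z; rewrite ord1.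
  have := congr1 (fun m : 'M[F]_(k, b) => m j c) hu.
  rewrite !mxE => ->.
  by have /rowP /(_ c) := hj; rewrite !mxE => ->; rewrite subrr.
move: hu; rewrite u0.
have -> : Cmat 0 = 0 by apply/matrixP => j c; rewrite !mxE trmx0 big1 // => ? _; rewrite mxE mulr0.
by move=> /esym /eqP; rewrite subr_eq0 (negbTE xy).
Qed.


Lemma code_to_rec (F : finFieldType) (t k l b : nat) (C : {vspace 'M[F]_(k, b)}) :
  (l <= \dim C)%N -> code_dist_ge C t.+1 ->
  exists Gt : 'M[F]_(k * b, l),
    row_full Gt /\
    forall T : {set 'I_k}, (#|T| <= t)%N -> forall s : 'rV[F]_l,
      exists x : 'M[F]_(k, b), (forall j, j \in T -> row j x = 0) /\ mxvec x *m Gt = s.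
Proof.
move=> hld hdist.
pose X := vbasis C.
pose g (i : nat) : 'M[F]_(k, b) := X`_i.
have gmem (i : 'I_l) : g i \in C.
  apply: vbasis_mem; apply: mem_nth; rewrite size_tuple.
  exact: leq_trans (ltn_ord i) hld.
have gfree (u : 'rV[F]_l) : \sum_(i < l) u 0 i *: g i = 0 -> u = 0.
  move=> hu.
  pose u' (n : nat) := if @insub nat (fun m => (m < l)%N) 'I_l n is Some i then u 0 i else 0.
  have hfree := basis_free (vbasisP C).
  have h2 : \sum_(i < \dim C) u' i *: X`_i = 0.
    rewrite -[RHS]hu.
    have -> : \sum_(i < l) u 0 i *: g i = \sum_(i < l) u' i *: X`_i.
      by apply: eq_bigr => i _; rewrite /u' valK.
    rewrite (big_ord_widen _ (fun n => u' n *: X`_n) hld) [RHS]big_mkcond /=.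
    apply: eq_bigr => i _; case: ifP => // hi.
    by rewrite /u' insubF // scale0r.
  have := (freeP hfree) _ h2.
  move=> hz; apply/rowP => i; rewrite mxE.
  have := hz (widen_ord hld i); rewrite /u' /= valK //.
pose GT (T : {set 'I_k}) : 'M[F]_(k * b, l) :=
  \matrix_(a, i) mxvec (maskT T (g i)) 0 a.
pose Gt : 'M[F]_(k * b, l) := \matrix_(a, i) mxvec (g i) 0 a.
have GT0 : GT set0 = Gt.
  apply/matrixP => a i; rewrite !mxE; congr (mxvec _ 0 a).
  by apply/matrixP => j c; rewrite !mxE in_set0.
have Rec_mask T A : mxvec (maskT T A) *m Gt = mxvec A *m GT T.
  rewrite !mxvec_mulE; apply/rowP => i; rewrite !mxE.
  apply: eq_bigr => j _; apply: eq_bigr => c _; rewrite ?mxE !mxvecE !mxE.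
  by case: (j \in T); rewrite ?mul0r ?mulr0.
have GTfull (T : {set 'I_k}) : (#|T| <= t)%N -> row_full (GT T).
  move=> hT; rewrite /row_full -mxrank_tr.
  suff : row_free (GT T)^T by [].
  apply: inj_row_free => u hu.
  pose w := \sum_(i < l) u 0 i *: g i.
  have wC : w \in C by apply: memv_suml => i _; apply: memvZ.
  have mw : maskT T w = 0.
    apply/matrixP => j c.
    have := congr1 (fun m : 'rV[F]__ => m 0 (mxvec_index j c)) hu.
    rewrite !mxE => h; case: ifP => // jT; apply: (etrans _ h).
    rewrite summxE; apply: eq_bigr => i _.
    by rewrite !mxE mxvecE !mxE jT.
  apply: gfree; rewrite -/w.
  apply/eqP; apply: contraT => wn0.
  have := hdist w 0 wC (mem0v C) wn0.
  rewrite ltnNge => /negP h; exfalso; apply: h.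
  apply: leq_trans hT; apply: subset_leq_card; apply/subsetP => j.
  rewrite inE; apply: contraR => jT; rewrite row0.
  apply/eqP/rowP => c; rewrite mxE.
  have /matrixP /(_ j c) := mw; by rewrite !mxE (negbTE jT).
exists Gt; split; first by rewrite -GT0; apply: GTfull; rewrite cards0.
move=> T hT s.
have /row_fullP [P hP] := GTfull T hT.
exists (maskT T (vec_mx (s *m P))); split.
  by move=> j jT; apply/rowP => c; rewrite !mxE jT.
by rewrite Rec_mask vec_mxK -mulmxA hP mulmx1.
Qed.


Lemma partB (F : finFieldType) (t k l b : nat) (Gt : 'M[F]_(k * b, l)) :
  (t <= k)%N -> row_full Gt ->
  (forall T : {set 'I_k}, (#|T| <= t)%N -> forall s : 'rV[F]_l,
      exists x : 'M[F]_(k, b), (forall j, j \in T -> row j x = 0) /\ mxvec x *m Gt = s) ->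
  BBT_exists_c F t k 'C(k, t) l b (l * 'C(k.-1, t)).
Proof.
move=> htk Gfull KL.
pose S := [set A : {set 'I_k} | #|A| == t].
have hS : #|S| = 'C(k, t) by rewrite card_draws card_ord.
pose Tv (v : 'I_'C(k, t)) : {set 'I_k} := @enum_val _ (mem S) (cast_ord (esym hS) v).
have TvS v : Tv v \in S by apply: enum_valP.
have Tvc v : #|Tv v| = t by have := TvS v; rewrite inE => /eqP.
have Tv_inj : injective Tv.
  by move=> v1 v2 /enum_val_inj /cast_ord_inj.
have Tv_surj A : A \in S -> exists v, Tv v = A.
  move=> hA; exists (cast_ord hS (enum_rank_in hA A)).
  by rewrite /Tv cast_ordK enum_rankK_in.
pose psi (i : 'I_l) (v : 'I_'C(k, t)) := ~: Tv v.
pose sel (T : {set 'I_k}) (s : 'rV[F]_l) : 'M[F]_(k, b) :=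
  odflt 0 [pick x : 'M[F]_(k, b) | [forall j, (j \in T) ==> (row j x == 0)] && (mxvec x *m Gt == s)].
have sel_spec (T : {set 'I_k}) (s : 'rV[F]_l) : (#|T| <= t)%N ->
    (forall j, j \in T -> row j (sel T s) = 0) /\ mxvec (sel T s) *m Gt = s.
  move=> hT; rewrite /sel; case: pickP => [x /andP [/forallP h /eqP hs] | hn] /=.
    by split => // j jT; apply/eqP; have := h j; rewrite jT.
  have [x [h1 h2]] := KL T hT s.
  have := hn x; rewrite h2 eqxx andbT => /negP; case.
  by apply/forallP => j; apply/implyP => jT; rewrite h1.
pose yget (j : 'I_k) (Yv : 'rV[F]_#|repl_set psi j|) (i : 'I_l) (v : 'I_'C(k, t)) : F :=
  if [pick a : 'I_#|repl_set psi j| | @enum_val _ (mem (repl_set psi j)) a == (i, v)] is Some a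
  then Yv 0 a else 0.
have yget_spec (y : 'I_l -> 'I_'C(k, t) -> F) (j : 'I_k) (i : 'I_l) (v : 'I_'C(k, t)) : (i, v) \in repl_set psi j ->
    yget j (Yof psi y j) i v = y i v.
  move=> hin; rewrite /yget; case: pickP => [a /eqP ha | hn].
    by rewrite mxE ha.
  by have := hn (enum_rank_in hin (i, v)); rewrite enum_rankK_in // eqxx.
pose phi (j : 'I_k) (Yv : 'rV[F]_#|repl_set psi j|) : 'rV[F]_b :=
  \sum_(v | j \notin Tv v) row j (sel (Tv v) (\row_i yget j Yv i v)).
have [P0 hP0] := row_fullP Gfull.
pose N : 'M[F]_(l + k * b, k * b) := col_mx P0 (1%:M - Gt *m P0).
pose M (j : 'I_k) : 'M[F]_(l + k * b, b) := \matrix_(a, c) N a (mxvec_index j c).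
pose R (j : 'I_k) : 'M[F]_(b, l) := \matrix_(c, i) Gt (mxvec_index j c) i.
have shareE (s : 'rV[F]_l) (r : 'rV[F]_(k * b)) (j : 'I_k) : share (bs := fun _ => b) M s r j = row j (vec_mx (row_mx s r *m N)).
  by apply/rowP => c; rewrite !mxE; apply: eq_bigr => a _; rewrite !mxE.
have sumR (x : 'M[F]_(k, b)) : \sum_(j in [set: 'I_k]) row j x *m R j = mxvec x *m Gt.
  rewrite mxvec_mulE; apply/rowP => i; rewrite summxE mxE.
  rewrite (eq_bigl xpredT) => [|jj]; last by rewrite inE.
  apply: eq_bigr => j _; rewrite !mxE; apply: eq_bigr => c _; by rewrite !mxE.
have wN (s : 'rV[F]_l) (r : 'rV[F]_(k * b)) : row_mx s r *m N = s *m P0 + r - (r *m Gt) *m P0.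
  by rewrite mul_row_col mulmxBr mulmx1 mulmxA addrA.
exists (k * b)%N, M, psi, phi; split.
  split.
  - exists R => s r.
    under eq_bigr do rewrite shareE.
    by rewrite sumR vec_mxK wN mulmxBl mulmxDl -!mulmxA hP0 !mulmx1 addrK.
  - move=> y.
    pose s := \row_i \sum_(v < 'C(k, t)) y i v.
    pose Xy := \sum_(v < 'C(k, t)) sel (Tv v) (\row_i y i v).
    have RecX : mxvec Xy *m Gt = s.
      rewrite linear_sum mulmx_suml.
      transitivity (\sum_(v < 'C(k, t)) \row_i y i v).
        by apply: eq_bigr => v _; apply: (sel_spec _ _ _).2; rewrite Tvc.
      by apply/rowP => i; rewrite summxE !mxE; apply: eq_bigr => v _; rewrite mxE.
    exists (mxvec Xy) => j.
    rewrite shareE wN RecX addrAC subrr add0r mxvecK.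
    rewrite /phi big_mkcond /Xy rowE mulmx_sumr.
    apply: eq_bigr => v _; rewrite -rowE; case: ifP => hj.
      congr (row j (sel _ _)); apply/rowP => i; rewrite !mxE yget_spec //.
      by rewrite inE /= in_setC hj.
    by rewrite (sel_spec _ _ _).1 ?Tvc // (negbFE hj).
  - move=> T hT i.
    have [A [hTA cA]] := ext_set hT htk.
    have [v0 hv0] : exists v, Tv v = A by apply: Tv_surj; rewrite inE cA.
    apply: leq_trans (subset_leq_card (_ : _ \subset [set~ v0])) _.
      apply/subsetP => v; rewrite !inE; apply: contraTneq => ->.
      rewrite negb_exists; apply/forallP => j; rewrite /psi in_setC hv0.
      by case: (boolP (j \in T)) => //= jT; rewrite negbK (subsetP hTA j jT).
    by rewrite cardsC1 card_ord subn1.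
move=> j.
have -> : repl_set psi j = setX [set: 'I_l] [set v | j \notin Tv v].
  by apply/setP => [[i v]]; rewrite !inE.
rewrite cardsX cardsT card_ord; congr (_ * _)%N.
rewrite -(card_imset _ Tv_inj).
have sub1 (A : {set 'I_k}) : (A \subset [set~ j]) = (j \notin A).
  by rewrite subsets_disjoint setCK disjoint_sym disjoints1.
have -> : Tv @: [set v | j \notin Tv v] = [set A : {set 'I_k} | A \subset [set~ j] & #|A| == t].
  apply/setP => A; rewrite inE sub1; apply/imsetP/andP.
    by case=> v; rewrite inE => hj ->; rewrite Tvc.
  case=> h1 /eqP h2; have [v hv] : exists v, Tv v = A by apply: Tv_surj; rewrite inE h2.
  by exists v => //; rewrite inE hv.
by rewrite cards_draws cardsC1 card_ord.
Qed.


Theorem mainTheorem12 (F : finFieldType) (t k l b : nat) :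
  (0 < t)%N -> (0 < k)%N -> (0 < l)%N -> (t < k)%N ->
  (l%:R / k%:R < b%:R :> rat) ->
  (BBT_exists F t k 'C(k, t) l b <->
   exists C : {vspace 'M[F]_(k, b)},
     l%:R / (k * b)%:R <= code_rate C /\ code_dist_ge C t.+1)
  /\
  ((exists C : {vspace 'M[F]_(k, b)},
      l%:R / (k * b)%:R <= code_rate C /\ code_dist_ge C t.+1) ->
   BBT_exists_c F t k 'C(k, t) l b (l * 'C(k.-1, t))).
Proof.
move=> ht hk hl htk hb.
have bpos : (0 < b)%N.
  rewrite lt0n; apply/negP => /eqP b0; move: hb; rewrite b0.
  apply/negP; rewrite -leNgt; apply: divr_ge0; exact: ler0n.
have HB : (exists C : {vspace 'M[F]_(k, b)},
      l%:R / (k * b)%:R <= code_rate C /\ code_dist_ge C t.+1) ->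
   BBT_exists_c F t k 'C(k, t) l b (l * 'C(k.-1, t)).
  case=> C [hr hd].
  have hld : (l <= \dim C)%N.
    move: hr; rewrite /code_rate mulnC ler_pM2r ?ler_nat //.
    by rewrite invr_gt0 ltr0n muln_gt0 hk bpos.
  have [Gt [Gf KL]] := code_to_rec hld hd.
  exact: partB (ltnW htk) Gf KL.
split => //; split.
  case=> e [M [psi [phi hB]]].
  by apply: (partA _ hB); rewrite bin_gt0 ltnW.
move=> /HB [e [M [psi [phi [hB _]]]]].
by exists e, M, psi, phi.
Qed.
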